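(* Let $\Theta=\bigcup_{n\in\mathbb N}\mathbb Z^n$, $d,M,\mathfrak d\in\mathbb N$, $T\in(0,\infty)$, $a\in C(\mathbb R,\mathbb R)$, and $\mathfrak J,\mathbf F,\mathbf G\in\mathbf N$ with $\mathcal D(\mathfrak J)=(1,\mathfrak d,1)$, $\mathcal R_a(\mathfrak J)=\mathrm{id}_{\mathbb R}$, $\mathcal R_a(\mathbf F)\in C(\mathbb R,\mathbb R)$, $\mathcal R_a(\mathbf G)\in C(\mathbb R^d,\mathbb R)$. For every $\theta\in\Theta$ let $\mathcal U^\theta\colon[0,T]\to[0,T]$ and $W^\theta\colon[-T,T]\to\mathbb R^d$ be functions (write $\mathcal U^\theta_t=\mathcal U^\theta(t)$, $W^\theta_s=W^\theta(s)$; for $\theta\in\Theta$ and integers $i,k$, $(\theta,i,k)\in\Theta$ denotes the concatenated tuple). For $\theta\in\Theta$, $n\in\mathbb N_0$ let $U^\theta_n\colon[0,T]\times\mathbb R^d\to\mathbb R$ satisfy for all $t\in[0,T]$, $x\in\mathbb R^d$ $$U^\theta_n(t,x)=\frac{\mathbb 1_{\mathbb N}(n)}{M^n}\sum_{k=1}^{M^n}(\mathcal R_a(\mathbf G))\bigl(x+W^{(\theta,0,-k)}_{T-t}\bigr)+\sum_{i=0}^{n-1}\frac{T-t}{M^{n-i}}\sum_{k=1}^{M^{n-i}}\Bigl[(\mathcal R_a(\mathbf F)\circ U^{(\theta,i,k)}_i)-\mathbb 1_{\mathbb N}(i)(\mathcal R_a(\mathbf F)\circ U^{(\theta,-i,k)}_{\max\{i-1,0\}})\Bigr]\bigl(\mathcal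 U^{(\theta,i,k)}_t,x+W^{(\theta,i,k)}_{\mathcal U^{(\theta,i,k)}_t-t}\bigr),$$ and let $\mathbf U^\theta_{n,t}\in\mathbf N$, $n\in\mathbb N_0$, $t\in[0,T]$, $\theta\in\Theta$, satisfy $\mathbf U^\theta_{0,t}=((0\ 0\ \cdots\ 0),0)\in\mathbb R^{1\times d}\times\mathbb R^1$ and, for $n\in\mathbb N$, $$\mathbf U^\theta_{n,t}=\Bigl[\bigoplus_{k=1}^{M^n}\bigl(\tfrac1{M^n}\circledast(\mathbf G\bullet\mathbf A_{\operatorname I_d,W^{(\theta,0,-k)}_{T-t}})\bigr)\Bigr]\boxplus_{\mathfrak J}\Bigl[\mathop{\boxplus}_{i=0,\mathfrak J}^{n-1}\Bigl(\tfrac{T-t}{M^{n-i}}\circledast\Bigl(\mathop{\boxplus}_{k=1,\mathfrak J}^{M^{n-i}}\bigl((\mathbf F\bullet\mathbf U^{(\theta,i,k)}_{i,\mathcal U^{(\theta,i,k)}_t})\bullet\mathbf A_{\operatorname I_d,W^{(\theta,i,k)}_{\mathcal U^{(\theta,i,k)}_t-t}}\bigr)\Bigr)\Bigr)\Bigr]\boxplus_{\mathfrak J}\Bigl[\mathop{\boxplus}_{i=0,\mathfrak J}^{n-1}\Bigl(\tfrac{(t-T)\mathbb 1_{\mathbb N}(i)}{M^{n-i}}\circledast\Bigl(\mathop{\boxplus}_{k=1,\mathfrak J}^{M^{n-i}}\bigl((\mathbf F\bullet\mathbf U^{(\theta,-i,k)}_{\max\{i-1,0\},\mathcal U^{(\theta,i,k)}_t})\bullet\mathbf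 A_{\operatorname I_d,W^{(\theta,i,k)}_{\mathcal U^{(\theta,i,k)}_t-t}}\bigr)\Bigr)\Bigr)\Bigr].$$ Then for all $\theta,\theta_1,\theta_2\in\Theta$, $n\in\mathbb N_0$, $t,t_1,t_2\in[0,T]$, $x\in\mathbb R^d$: (i) $\mathcal D(\mathbf U^{\theta_1}_{n,t_1})=\mathcal D(\mathbf U^{\theta_2}_{n,t_2})$; (ii) $\mathcal R_a(\mathbf U^\theta_{n,t})\in C(\mathbb R^d,\mathbb R)$; (iii) $\mathcal L(\mathbf U^\theta_{n,t})\le\max\{\mathfrak d,\mathcal L(\mathbf G)\}+n\mathcal H(\mathbf F)$; (iv) $|||\mathcal D(\mathbf U^\theta_{n,t})|||\le\max\{\mathfrak d,|||\mathcal D(\mathbf F)|||,|||\mathcal D(\mathbf G)|||\}(3M)^n$; (v) $U^\theta_n(t,x)=(\mathcal R_a(\mathbf U^\theta_{n,t}))(x)$; (vi) $\mathcal P(\mathbf U^\theta_{n,t})\le2(\max\{\mathfrak d,\mathcal L(\mathbf G)\}+n\mathcal H(\mathbf F))\bigl(\max\{\mathfrak d,|||\mathcal D(\mathbf F)|||,|||\mathcal D(\mathbf G)|||\}\bigr)^2(3M)^{2n}$.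
   Context: Artificial neural networks (ANNs). Let $\mathbb N=\{1,2,\dots\}$, $\mathbb N_0=\mathbb N\cup\{0\}$, and $\mathbf N=\bigcup_{L\in\mathbb N}\bigcup_{l_0,\dots,l_L\in\mathbb N}\prod_{k=1}^L(\mathbb R^{l_k\times l_{k-1}}\times\mathbb R^{l_k})$. For $\Phi=((W_1,B_1),\dots,(W_L,B_L))\in\prod_{k=1}^L(\mathbb R^{l_k\times l_{k-1}}\times\mathbb R^{l_k})$ set $\mathcal P(\Phi)=\sum_{k=1}^Ll_k(l_{k-1}+1)$, $\mathcal L(\Phi)=L$, $\mathcal I(\Phi)=l_0$, $\mathcal O(\Phi)=l_L$, $\mathcal H(\Phi)=L-1$, $\mathcal D(\Phi)=(l_0,\dots,l_L)$, and for $n\in\mathbb N_0$ let $\mathbb D_n(\Phi)=l_n$ if $n\le L$ and $0$ otherwise. For $x\in\mathbb R^m$, $|||x|||=\max_i|x_i|$. For $a\in C(\mathbb R,\mathbb R)$ the realization $\mathcal R_a(\Phi)\in C(\mathbb R^{l_0},\mathbb R^{l_L})$ is $(\mathcal R_a(\Phi))(x_0)=W_Lx_{L-1}+B_L$ with $x_k=\mathfrak M_{a,l_k}(W_kx_{k-1}+B_k)$, $k=1,\dots,L-1$, where $\mathfrak M_{a,m}(y_1,\dots,y_m)=(a(y_1),\dots,a(y_m))$. Operations on ANNs. $\operatorname I_n$ is the $n\times n$ identity matrix. For $W\in\mathbb R^{m\times n}$, $B\in\mathbb R^m$ let $\mathbf A_{W,B}=((W,B))\in\mathbf N$ (one layer;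 for reals $w,b$, $\mathbf A_{w,b}$ has $1\times1$ weight $w$ and bias $b$). Composition: for $\Phi_1=((W_1,B_1),\dots,(W_L,B_L))$ and $\Phi_2=((\mathscr W_1,\mathscr B_1),\dots,(\mathscr W_{\mathfrak L},\mathscr B_{\mathfrak L}))$ with $\mathcal I(\Phi_1)=\mathcal O(\Phi_2)$, $\Phi_1\bullet\Phi_2=((\mathscr W_1,\mathscr B_1),\dots,(\mathscr W_{\mathfrak L-1},\mathscr B_{\mathfrak L-1}),(W_1\mathscr W_{\mathfrak L},W_1\mathscr B_{\mathfrak L}+B_1),(W_2,B_2),\dots,(W_L,B_L))$ (an ANN of length $L+\mathfrak L-1$). Scalar multiplication: $\lambda\circledast\Phi=\mathbf A_{\lambda\operatorname I_{\mathcal O(\Phi)},0}\bullet\Phi$. Parallelization: for $\Phi_j=((W_{j,1},B_{j,1}),\dots,(W_{j,L},B_{j,L}))$, $j=1,\dots,n$, of equal length $L$, $\mathbf P_n(\Phi_1,\dots,\Phi_n)$ is the ANN whose $k$-th layer is $(\operatorname{diag}(W_{1,k},\dots,W_{n,k}),(B_{1,k},\dots,B_{n,k}))$ (block-diagonal weight matrix, stacked bias). $\mathfrak S_{m,n}=\mathbf A_{(\operatorname I_m\,\cdots\,\operatorname I_m),0}\in\mathbb R^{m\times nm}\times\mathbb R^m$ and $\mathfrak T_{m,n}=\mathbf A_{(\operatorname I_m\,\cdots\,\operatorname I_m)^{\top},0}$ ($n$ identity blocks). Sum of ANNs of equal length: if $\Phi_u,\dots,\Phi_v$ all have the same $\mathcal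 L,\mathcal I,\mathcal O$, then $\bigoplus_{k=u}^v\Phi_k=\mathfrak S_{\mathcal O(\Phi_u),v-u+1}\bullet\bigl([\mathbf P_{v-u+1}(\Phi_u,\dots,\Phi_v)]\bullet\mathfrak T_{\mathcal I(\Phi_u),v-u+1}\bigr)$. Powers: for $\mathcal I(\Psi)=\mathcal O(\Psi)$, $\Psi^{\bullet0}=((\operatorname I_{\mathcal O(\Psi)},0))$ and $\Psi^{\bullet n}=\Psi\bullet\Psi^{\bullet(n-1)}$. Extension: for $\mathcal L(\Phi)\le L$ and $\mathcal O(\Phi)=\mathcal I(\Psi)=\mathcal O(\Psi)$, $\mathcal E_{L,\Psi}(\Phi)=\Psi^{\bullet(L-\mathcal L(\Phi))}\bullet\Phi$. Sum of ANNs of different lengths: if $\mathcal I(\Phi_k)=\mathcal I(\Phi_u)$, $\mathcal O(\Phi_k)=\mathcal I(\Psi)=\mathcal O(\Psi)$ for all $k$ and $\mathcal H(\Psi)=1$, then $\mathop{\boxplus}_{k=u,\Psi}^v\Phi_k=\bigoplus_{k=u}^v\mathcal E_{\max_{j\in\{u,\dots,v\}}\mathcal L(\Phi_j),\Psi}(\Phi_k)$, also written $\Phi_u\boxplus_\Psi\Phi_{u+1}\boxplus_\Psi\cdots\boxplus_\Psi\Phi_v$. *)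

(* Defs.v *)
From HB Require Import structures.
From mathcomp Require Import all_boot all_order all_algebra.
From mathcomp Require Import all_classical all_reals all_analysis.

Set Implicit Arguments.
Unset Strict Implicit.
Unset Printing Implicit Defensive.
Import Order.TTheory GRing.Theory Num.Theory.
Local Open Scope ring_scope.

(* A value of type
   [ann R i o] is a list of affine layers ((W_1,B_1),...,(W_L,B_L)),
   W_k : 'M_(l_k, l_(k-1)), B_k : 'cV_(l_k), with l_0 = i, l_L = o.
   [ALast W B] is the final layer; [ACons W B Phi] prepends a layer.
   (Membership in the set \mathbf N additionally requires all l_k >= 1,
   see [ann_pos].) *)
Inductive ann (R : Type) : nat -> nat -> Type :=
| ALast : forall i o, 'M[R]_(o, i) -> 'cV[R]_o -> ann R i o
| ACons : forall i h o, 'M[R]_(h, i) -> 'cV[R]_h -> ann R h o -> ann R i o.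
Arguments ALast {R i o}.
Arguments ACons {R i h o}.

Section ANN.
Variable R : pzRingType.

Fixpoint dims i o (Phi : ann R i o) : seq nat :=
  match Phi with
  | ALast i o _ _ => [:: i; o]
  | ACons i _ _ _ _ Phi' => i :: dims Phi'
  end.

Fixpoint alen i o (Phi : ann R i o) : nat :=
  match Phi with
  | ALast _ _ _ _ => 1%N
  | ACons _ _ _ _ _ Phi' => (alen Phi').+1
  end.

Definition ahidden i o (Phi : ann R i o) : nat := (alen Phi).-1.

Fixpoint aparams i o (Phi : ann R i o) : nat :=
  match Phi with
  | ALast i o _ _ => (o * (i + 1))%N
  | ACons i h _ _ _ Phi' => (h * (i + 1) + aparams Phi')%N
  end.

Definition maxdim i o (Phi : ann R i o) : nat := (\max_(l <- dims Phi) l)%N.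

Definition ann_pos i o (Phi : ann R i o) : bool := all (fun l => 0 < l)%N (dims Phi).

Fixpoint realization (a : R -> R) i o (Phi : ann R i o) : 'cV[R]_i -> 'cV[R]_o :=
  match Phi in ann _ i o return 'cV[R]_i -> 'cV[R]_o with
  | ALast _ _ W B => fun x => W *m x + B
  | ACons _ _ _ W B Phi' => fun x => realization a Phi' (map_mx a (W *m x + B))
  end.

Definition aff m n (W : 'M[R]_(m, n)) (B : 'cV[R]_m) : ann R n m := ALast W B.

Definition premerge h o (Phi1 : ann R h o) : forall i, 'M[R]_(h, i) -> 'cV[R]_h -> ann R i o :=
  match Phi1 in ann _ h o return forall i, 'M[R]_(h, i) -> 'cV[R]_h -> ann R i o with
  | ALast _ _ W1 B1 => fun i W B => ALast (W1 *m W) (W1 *m B + B1)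
  | ACons _ _ _ W1 B1 Phi1' => fun i W B => ACons (W1 *m W) (W1 *m B + B1) Phi1'
  end.

Fixpoint comp_aux i h (Phi2 : ann R i h) {struct Phi2} : forall o, ann R h o -> ann R i o :=
  match Phi2 in ann _ i h return forall o, ann R h o -> ann R i o with
  | ALast _ _ W B => fun o Phi1 => premerge Phi1 W B
  | ACons _ _ _ W B Phi2' => fun o Phi1 => ACons W B (comp_aux Phi2' Phi1)
  end.

(* composition Phi1 \bullet Phi2 (first Phi2, then Phi1) *)
Definition acomp i h o (Phi1 : ann R h o) (Phi2 : ann R i h) : ann R i o :=
  comp_aux Phi2 Phi1.

Definition ascale i o (lam : R) (Phi : ann R i o) : ann R i o :=
  acomp (aff (lam%:M : 'M[R]_o) 0) Phi.

(* parallelization of two ANNs of equal length: block-diagonal weights,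
   stacked biases (the value for unequal lengths is irrelevant). *)
Fixpoint par2 i1 o1 (Phi1 : ann R i1 o1) {struct Phi1} :
    forall i2 o2, ann R i2 o2 -> ann R (i1 + i2) (o1 + o2) :=
  match Phi1 in ann _ i1 o1 return forall i2 o2, ann R i2 o2 -> ann R (i1 + i2) (o1 + o2) with
  | ALast i1 o1 W1 B1 => fun i2 o2 Phi2 =>
      match Phi2 in ann _ i2 o2 return ann R (i1 + i2) (o1 + o2) with
      | ALast _ _ W2 B2 => ALast (block_mx W1 0 0 W2) (col_mx B1 B2)
      | ACons _ _ _ _ _ _ => ALast 0 0
      end
  | ACons i1 h1 o1 W1 B1 Phi1' => fun i2 o2 Phi2 =>
      match Phi2 in ann _ i2 o2 return ann R (i1 + i2) (o1 + o2) with
      | ALast _ _ _ _ => ALast 0 0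
      | ACons _ _ _ W2 B2 Phi2' =>
          ACons (block_mx W1 0 0 W2) (col_mx B1 B2) (par2 Phi1' Phi2')
      end
  end.

Fixpoint rep (X : Type) (s : seq X) (m : nat) : nat :=
  match s with
  | [::] => m
  | _ :: s' => (m + rep s' m)%N
  end.

(* P_n(Phi_0, ..., Phi_{n-1}) for the family Phi_0 :: s, all in ann R i o
   (block-diagonal diag(W_0,...,W_{n-1}) written as nested 2x2 blocks) *)
Fixpoint apar i o (Phi0 : ann R i o) (s : seq (ann R i o)) {struct s} :
    ann R (rep s i) (rep s o) :=
  match s return ann R (rep s i) (rep s o) with
  | [::] => Phi0
  | Phi1 :: s' => par2 Phi0 (apar Phi1 s')
  end.

(* S_{m,n} = (I_m ... I_m) and T_{m,n} = (I_m ... I_m)^T, n = size s + 1 *)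
Fixpoint Smx (X : Type) m (s : seq X) : 'M[R]_(m, rep s m) :=
  match s return 'M[R]_(m, rep s m) with
  | [::] => 1%:M
  | _ :: s' => row_mx 1%:M (Smx m s')
  end.
Fixpoint Tmx (X : Type) m (s : seq X) : 'M[R]_(rep s m, m) :=
  match s return 'M[R]_(rep s m, m) with
  | [::] => 1%:M
  | _ :: s' => col_mx 1%:M (Tmx m s')
  end.

(* sum (+)_{k} Phi_k of the family Phi0 :: s (all of equal length) *)
Definition asum i o (Phi0 : ann R i o) (s : seq (ann R i o)) : ann R i o :=
  acomp (aff (Smx o s) 0) (acomp (apar Phi0 s) (aff (Tmx i s) 0)).

(* (+)_{k=u}^{v} f k, for u <= v *)
Definition asumf i o (f : nat -> ann R i o) (u v : nat) : ann R i o :=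
  asum (f u) [seq f k | k <- iota u.+1 (v - u)].

Fixpoint apow o (Psi : ann R o o) (n : nat) : ann R o o :=
  match n with
  | 0 => aff (1%:M : 'M[R]_o) 0
  | n'.+1 => acomp Psi (apow Psi n')
  end.

Definition aext i o (L : nat) (Psi : ann R o o) (Phi : ann R i o) : ann R i o :=
  acomp (apow Psi (L - alen Phi)) Phi.

Definition abox i o (Psi : ann R o o) (Phi0 : ann R i o) (s : seq (ann R i o)) : ann R i o :=
  let L := (\max_(Phi <- Phi0 :: s) alen Phi)%N in
  asum (aext L Psi Phi0) [seq aext L Psi Phi | Phi <- s].

(* boxplus_{k=u,Psi}^{v} f k, for u <= v *)
Definition aboxf i o (Psi : ann R o o) (f : nat -> ann R i o) (u v : nat) : ann R i o :=
  abox Psi (f u) [seq f k | k <- iota u.+1 (v - u)].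

Definition real11 (a : R -> R) (Phi : ann R 1 1) (r : R) : R :=
  realization a Phi (const_mx r) 0 0.
Definition realn1 (a : R -> R) d (Phi : ann R d 1) (x : 'cV[R]_d) : R :=
  realization a Phi x 0 0.

End ANN.

(* Main.v *)
Require Import Defs.
From HB Require Import structures.
From mathcomp Require Import all_boot all_order all_algebra.
From mathcomp Require Import all_classical all_reals all_analysis.
From mathcomp Require Import zify ring.
Import Order.TTheory GRing.Theory Num.Theory numFieldNormedType.Exports.
Local Open Scope ring_scope.

Module Helpers.
Set Implicit Arguments.
Unset Strict Implicit.
Unset Printing Implicit Defensive.
Local Open Scope ring_scope.


Fixpoint padd (l1 l2 : seq nat) : seq nat :=
  match l1, l2 with
  | x :: l1', y :: l2' => (x + y)%N :: padd l1' l2'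
  | _, _ => [::]
  end.

Fixpoint hdpar (l0 : seq nat) (ls : seq (seq nat)) : seq nat :=
  match ls with
  | [::] => l0
  | l1 :: ls' => padd l0 (hdpar l1 ls')
  end.

Definition mxl (l : seq nat) : nat := (\max_(x <- l) x)%N.

Lemma size_padd l1 l2 : size (padd l1 l2) = minn (size l1) (size l2).
Proof.
elim: l1 l2 => [|x l1 IH] [|y l2] //=; rewrite IH; lia.
Qed.

Lemma size_hdpar l0 ls : all (fun l => size l == size l0) ls ->
  size (hdpar l0 ls) = size l0.
Proof.
elim: ls l0 => [|l1 ls IH] l0 //= /andP[/eqP h1 h2].
rewrite size_padd IH; first by rewrite h1 minnn.
by apply/allP => l hl; rewrite h1; exact: (allP h2).
Qed.

Lemma mxl_cat l1 l2 : mxl (l1 ++ l2) = maxn (mxl l1) (mxl l2).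
Proof. by rewrite /mxl big_cat. Qed.

Lemma mxl_cons x l : mxl (x :: l) = maxn x (mxl l).
Proof. by rewrite /mxl big_cons. Qed.

Lemma mxl_nil : mxl [::] = 0%N.
Proof. by rewrite /mxl big_nil. Qed.

Lemma mxl_padd l1 l2 : (mxl (padd l1 l2) <= mxl l1 + mxl l2)%N.
Proof.
elim: l1 l2 => [|x l1 IH] [|y l2] //=; rewrite ?mxl_nil //.
rewrite !mxl_cons; have := IH l2; lia.
Qed.

Lemma mxl_hdpar l0 ls : (mxl (hdpar l0 ls) <= \sum_(l <- l0 :: ls) mxl l)%N.
Proof.
elim: ls l0 => [|l1 ls IH] l0 /=; first by rewrite big_cons big_nil addn0.
rewrite big_cons; apply: leq_trans (mxl_padd _ _) _.
by rewrite leq_add2l; exact: IH.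
Qed.

Lemma mxl_nseq k h : (mxl (nseq k h) <= h)%N.
Proof. by elim: k => [|k IH] /=; rewrite ?mxl_nil ?mxl_cons //; lia. Qed.

Lemma all_le_bigmax (X : Type) (F : X -> nat) (s : seq X) :
  all (fun x => F x <= \max_(y <- s) F y)%N s.
Proof.
elim: s => [|x s IH] //=; rewrite big_cons leq_maxl /=.
by apply: sub_all IH => y /= hy; apply: leq_trans hy (leq_maxr _ _).
Qed.

Lemma mxl_cat_nseq l k h : (mxl (l ++ nseq k h) <= maxn (mxl l) h)%N.
Proof. by rewrite mxl_cat; have := mxl_nseq k h; lia. Qed.

Section Struct.
Variable R : pzRingType.

Fixpoint hd i o (P : ann R i o) : seq nat :=
  match P with
  | ALast _ _ _ _ => [::]
  | ACons _ h _ _ _ P' => h :: hd P'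
  end.

Lemma dimsE i o (P : ann R i o) : dims P = i :: rcons (hd P) o.
Proof. by elim: P => //= i' h o' W B P ->. Qed.

Lemma alenE i o (P : ann R i o) : alen P = (size (hd P)).+1.
Proof. by elim: P => //= i' h o' W B P ->. Qed.

Lemma hd_premerge h o (P1 : ann R h o) i (W : 'M[R]_(h, i)) B :
  hd (premerge P1 W B) = hd P1.
Proof. by case: P1 W B. Qed.

Lemma hd_acomp i h o (P1 : ann R h o) (P2 : ann R i h) :
  hd (acomp P1 P2) = hd P2 ++ hd P1.
Proof.
rewrite /acomp; elim: P2 o P1 => [i' h' W B|i' h' o' W B P2 IH] o P1 /=.
  exact: hd_premerge.
by rewrite IH.
Qed.

Lemma alen_acomp i h o (P1 : ann R h o) (P2 : ann R i h) :
  alen (acomp P1 P2) = (alen P1 + alen P2).-1.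
Proof. by rewrite !alenE hd_acomp size_cat; lia. Qed.

Lemma hd_aff m n (W : 'M[R]_(m, n)) B : hd (aff W B) = [::].
Proof. by []. Qed.

Lemma hd_ascale i o lam (P : ann R i o) : hd (ascale lam P) = hd P.
Proof. by rewrite /ascale hd_acomp cats0. Qed.

Lemma hd_par2 i1 o1 (P1 : ann R i1 o1) i2 o2 (P2 : ann R i2 o2) :
  hd (par2 P1 P2) = padd (hd P1) (hd P2).
Proof.
elim: P1 i2 o2 P2 => [i o W B|i h o W B P1 IH] i2 o2 [i' o' W' B'|i' h' o' W' B' P2] //=.
by rewrite IH.
Qed.

Lemma hd_apar i o (P0 : ann R i o) s : hd (apar P0 s) = hdpar (hd P0) (map (@hd i o) s).
Proof.
elim: s P0 => [|P1 s IH] P0 //=.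
by rewrite hd_par2 IH.
Qed.

Lemma hd_asum i o (P0 : ann R i o) s : hd (asum P0 s) = hdpar (hd P0) (map (@hd i o) s).
Proof. by rewrite /asum !hd_acomp /= cats0 hd_apar. Qed.

Lemma hd_apow o (J : ann R o o) h k : hd J = [:: h] -> hd (apow J k) = nseq k h.
Proof.
move=> hJ; elim: k => [|k IH] //=.
rewrite hd_acomp IH hJ; elim: k {IH} => //= k ->; done.
Qed.

Lemma hd_aext i o L (J : ann R o o) h (P : ann R i o) : hd J = [:: h] ->
  hd (aext L J P) = hd P ++ nseq (L - alen P) h.
Proof. by move=> hJ; rewrite /aext hd_acomp (hd_apow _ hJ). Qed.

Lemma alen_aext i o L (J : ann R o o) h (P : ann R i o) : hd J = [:: h] ->
  (alen P <= L)%N -> alen (aext L J P) = L.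
Proof.
move=> hJ hL; rewrite alenE (hd_aext _ _ hJ) size_cat size_nseq; have := alenE P; lia.
Qed.

Lemma hd_abox i o (J : ann R o o) h (P0 : ann R i o) s : hd J = [:: h] ->
  let L := (\max_(P <- P0 :: s) alen P)%N in
  hd (abox J P0 s) =
    hdpar (hd P0 ++ nseq (L - alen P0) h) [seq hd P ++ nseq (L - alen P) h | P <- s].
Proof.
move=> hJ L; rewrite /abox hd_asum -/L (hd_aext _ _ hJ) -map_comp.
by congr hdpar; apply: eq_map => P /=; rewrite (hd_aext _ _ hJ).
Qed.

Lemma alen_abox i o (J : ann R o o) h (P0 : ann R i o) s : hd J = [:: h] ->
  alen (abox J P0 s) = (\max_(P <- P0 :: s) alen P)%N.
Proof.
move=> hJ; set L := (\max_(P <- P0 :: s) alen P)%N.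
have hall := all_le_bigmax (@alen R i o) (P0 :: s); rewrite -/L /= in hall.
case/andP: hall => h0 hs.
rewrite alenE (hd_abox _ _ hJ) -/L size_hdpar.
  by rewrite size_cat size_nseq; have := alenE P0; lia.
rewrite all_map; apply: sub_all hs => P /= hP; rewrite !size_cat !size_nseq.
have := alenE P0; have := alenE P; lia.
Qed.

Lemma mw_abox i o (J : ann R o o) h (P0 : ann R i o) s : hd J = [:: h] ->
  (mxl (hd (abox J P0 s)) <= \sum_(P <- P0 :: s) maxn (mxl (hd P)) h)%N.
Proof.
move=> hJ; rewrite (hd_abox _ _ hJ); apply: leq_trans (mxl_hdpar _ _) _.
rewrite !big_cons big_map; apply: leq_add.
  exact: mxl_cat_nseq.
by apply: leq_sum => P _; exact: mxl_cat_nseq.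
Qed.

Lemma hd_asumf i o (f : nat -> ann R i o) u v :
  hd (asumf f u v) = hdpar (hd (f u)) [seq hd (f k) | k <- iota u.+1 (v - u)].
Proof. by rewrite /asumf hd_asum -map_comp. Qed.

End Struct.

Section Real.
Variable R : pzRingType.
Variable a : R -> R.

Lemma real_premerge h o (P1 : ann R h o) i (W : 'M[R]_(h, i)) B x :
  realization a (premerge P1 W B) x = realization a P1 (W *m x + B).
Proof. by case: P1 W B => [i' o' W1 B1|i' h' o' W1 B1 P1'] W B /=; rewrite mulmxDr mulmxA addrA. Qed.

Lemma real_acomp i h o (P1 : ann R h o) (P2 : ann R i h) x :
  realization a (acomp P1 P2) x = realization a P1 (realization a P2 x).
Proof.
rewrite /acomp; elim: P2 o P1 x => [i' h' W B|i' h' o' W B P2 IH] o P1 x /=.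
  exact: real_premerge.
by rewrite IH.
Qed.

Lemma real_ascale i o lam (P : ann R i o) x :
  realization a (ascale lam P) x = lam *: realization a P x.
Proof. by rewrite /ascale real_acomp /= mul_scalar_mx addr0. Qed.

Lemma real_par2 i1 o1 (P1 : ann R i1 o1) i2 o2 (P2 : ann R i2 o2) x1 x2 :
  alen P1 = alen P2 ->
  realization a (par2 P1 P2) (col_mx x1 x2) = col_mx (realization a P1 x1) (realization a P2 x2).
Proof.
elim: P1 i2 o2 P2 x1 x2 => [i o W B|i h o W B P1 IH] i2 o2 [i' o' W' B'|i' h' o' W' B' P2] x1 x2 //=.
- by move=> _; rewrite mul_block_col !mul0mx addr0 add0r add_col_mx.
- by move=> [] /eqP; rewrite alenE.
- by move=> [] /esym /eqP; rewrite alenE.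
move=> [] hl; rewrite mul_block_col !mul0mx addr0 add0r add_col_mx map_col_mx.
exact: IH.
Qed.

Lemma alen_apar i o (P0 : ann R i o) s : all (fun P => alen P == alen P0) s ->
  alen (apar P0 s) = alen P0.
Proof.
move=> hs; rewrite !alenE hd_apar size_hdpar //.
rewrite all_map; apply: sub_all hs => P /= /eqP; rewrite !alenE => -[] ->; done.
Qed.

Lemma real_apar i o (P0 : ann R i o) s x : all (fun P => alen P == alen P0) s ->
  @Smx R _ o s *m realization a (apar P0 s) (@Tmx R _ i s *m x) =
  realization a P0 x + \sum_(P <- s) realization a P x.
Proof.
elim: s P0 => [|P1 s IH] P0 /=.
  by move=> _; rewrite !mul1mx big_nil addr0.
case/andP => /eqP h1 hs.
rewrite mul_col_mx mul1mx real_par2; last first.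
  rewrite alen_apar ?h1 //; apply: sub_all hs => P /eqP ->; by rewrite h1.
rewrite mul_row_col mul1mx IH; first by rewrite big_cons.
by apply: sub_all hs => P /eqP ->; rewrite h1.
Qed.

Lemma real_asum i o (P0 : ann R i o) s x : all (fun P => alen P == alen P0) s ->
  realization a (asum P0 s) x = realization a P0 x + \sum_(P <- s) realization a P x.
Proof.
move=> hs; rewrite /asum !real_acomp /= addr0 addr0; exact: real_apar.
Qed.

Lemma real_apow o (J : ann R o o) k y : (forall z, realization a J z = z) ->
  realization a (apow J k) y = y.
Proof.
move=> hJ; elim: k y => [|k IH] y /=; first by rewrite mul1mx addr0.
by rewrite real_acomp hJ IH.
Qed.

Lemma real_abox i o (J : ann R o o) h (P0 : ann R i o) s x :
  hd J = [:: h] -> (forall z, realization a J z = z) ->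
  realization a (abox J P0 s) x = realization a P0 x + \sum_(P <- s) realization a P x.
Proof.
move=> hJ rJ; rewrite /abox.
set L := (\max_(P <- P0 :: s) alen P)%N.
have hall := all_le_bigmax (@alen R i o) (P0 :: s); rewrite -/L /= in hall.
case/andP: hall => h0 hs.
rewrite real_asum.
  rewrite /aext real_acomp real_apow // big_map; congr (_ + _).
  by apply: eq_bigr => P _; rewrite real_acomp real_apow.
rewrite all_map (alen_aext hJ h0); apply: sub_all hs => P /= hP.
by rewrite (alen_aext hJ hP).
Qed.

Lemma sum_iota_split (V : nmodType) (g : nat -> V) u v : (u <= v)%N ->
  g u + \sum_(k <- iota u.+1 (v - u)) g k = \sum_(u <= k < v.+1) g k.
Proof.
move=> huv; rewrite (big_ltn (F := g)) ?ltnS //.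
Qed.

Lemma real_aboxf i o (J : ann R o o) h (f : nat -> ann R i o) u v x :
  hd J = [:: h] -> (forall z, realization a J z = z) -> (u <= v)%N ->
  realization a (aboxf J f u v) x = \sum_(u <= k < v.+1) realization a (f k) x.
Proof.
move=> hJ rJ huv; rewrite /aboxf (real_abox _ _ _ hJ rJ) big_map.
exact: (sum_iota_split (fun k => realization a (f k) x)).
Qed.

Lemma real_asumf i o (f : nat -> ann R i o) u v x :
  (forall k, alen (f k) = alen (f u)) -> (u <= v)%N ->
  realization a (asumf f u v) x = \sum_(u <= k < v.+1) realization a (f k) x.
Proof.
move=> hf huv; rewrite /asumf real_asum.
  by rewrite big_map; exact: (sum_iota_split (fun k => realization a (f k) x)).
by rewrite all_map; apply/allP => k _ /=; rewrite hf.
Qed.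

End Real.

Import numFieldNormedType.Exports.
Local Open Scope classical_set_scope.
Section Cont.
Variable R : realType.

Lemma mx_cont (X : topologicalType) m n (f : X -> 'M[R]_(m,n)) :
  (forall i j, continuous (fun x => f x i j)) -> continuous f.
Proof.
move=> fc x A [P Pnb sPA].
have : \forall y \near x, forall ij : 'I_m * 'I_n, P ij.1 ij.2 (f y ij.1 ij.2).
  apply: filter_forall => -[i j] /=; exact: (fc i j x _ (Pnb i j)).
apply: filterS => y hy; apply: sPA => i j; exact: (hy (i, j)).
Qed.

Lemma sum_cont (X : topologicalType) (I : Type) (s : seq I) (g : I -> X -> R) :
  (forall k, continuous (g k)) -> continuous (fun x => \sum_(k <- s) g k x).
Proof.
move=> gc; elim: s => [|k s IH].
  by under eq_fun do rewrite big_nil; exact: cst_continuous.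
under eq_fun do rewrite big_cons.
by move=> x; apply: continuousD; [exact: gc|exact: IH].
Qed.

Lemma aff_cont m n (W : 'M[R]_(m, n)) B : continuous (fun x : 'M[R]_(n, 1) => W *m x + B).
Proof.
apply: mx_cont => i j.
under eq_fun do rewrite !mxE.
move=> x; apply: continuousD; last exact: cst_continuous.
apply: sum_cont => k y; apply: continuousM; first exact: cst_continuous.
exact: coord_continuous.
Qed.

Lemma map_cont (a : R -> R) m n : continuous a -> continuous (fun x : 'M[R]_(m, n) => map_mx a x).
Proof.
move=> ac; apply: mx_cont => i j; under eq_fun do rewrite mxE.
move=> x; apply: (@continuous_comp _ _ _ (fun M : 'M[R]_(m, n) => M i j) a).
  exact: coord_continuous.
exact: ac.
Qed.

Lemma real_cont (a : R -> R) i o (P : ann R i o) : continuous a -> continuous (realization a P).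
Proof.
move=> ac; elim: P => [i' o' W B|i' h o' W B P IH] /=; first exact: aff_cont.
move=> x; apply: (@continuous_comp _ _ _ (fun y => map_mx a (W *m y + B)) (realization a P)); last exact: IH.
apply: (@continuous_comp _ _ _ (fun y => W *m y + B) (map_mx a)); first exact: aff_cont.
exact: map_cont.
Qed.
End Cont.

Section Params.
Variable R : pzRingType.

Lemma maxdim_cons i h o W B (P : ann R h o) :
  maxdim (ACons (i := i) W B P) = maxn i (maxdim P).
Proof. by rewrite /maxdim /= big_cons. Qed.

Lemma head_le_maxdim i o (P : ann R i o) : (i <= maxdim P)%N.
Proof. by rewrite /maxdim dimsE big_cons leq_maxl. Qed.

Lemma maxdimE i o (P : ann R i o) : maxdim P = maxn i (maxn (mxl (hd P)) o).
Proof.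
by rewrite /maxdim dimsE big_cons -cats1 big_cat big_seq1.
Qed.

Lemma aparams_le i o (P : ann R i o) :
  (aparams P <= alen P * (maxdim P * (maxdim P).+1))%N.
Proof.
elim: P => [i' o' W B|i' h o' W B P IH] /=.
  rewrite /maxdim /= !big_cons big_nil maxn0 mul1n addn1.
  by apply: leq_mul; [exact: leq_maxr|rewrite ltnS leq_maxl].
rewrite maxdim_cons mulSn addn1.
have hh := head_le_maxdim P.
apply: leq_add.
  apply: leq_mul; first by apply: leq_trans hh (leq_maxr _ _).
  by rewrite ltnS leq_maxl.
apply: leq_trans IH _; apply: leq_mul => //.
by apply: leq_mul; [exact: leq_maxr|rewrite ltnS leq_maxr].
Qed.
End Params.



Lemma size_hdpar_le l0 ls : (size (hdpar l0 ls) <= size l0)%N.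
Proof. elim: ls l0 => [|l1 ls IH] l0 //=; rewrite size_padd; lia. Qed.

Section Struct2.
Variable R : pzRingType.

Lemma alen_ascale i o lam (P : ann R i o) : alen (ascale lam P) = alen P.
Proof. by rewrite !alenE hd_ascale. Qed.

Lemma hd_abox_ext i o (J : ann R o o) h (P0 Q0 : ann R i o) s s' : hd J = [:: h] ->
  hd P0 = hd Q0 -> map (@hd R i o) s = map (@hd R i o) s' ->
  hd (abox J P0 s) = hd (abox J Q0 s').
Proof.
move=> hJ e0 es; rewrite !(hd_abox _ _ hJ) /=.
have hmax : forall s0 : seq (ann R i o),
    (\max_(P <- s0) alen P = \max_(l <- map (@hd R i o) s0) (size l).+1)%N.
  by move=> s0; rewrite big_map; apply: eq_bigr => P _; rewrite alenE.
have hm : forall L (s0 : seq (ann R i o)),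
   [seq hd P ++ nseq (L - alen P) h | P <- s0] =
   map (fun l => l ++ nseq (L - (size l).+1) h) (map (@hd R i o) s0).
  by move=> L s0; rewrite -map_comp; apply: eq_map => P /=; rewrite alenE.
rewrite !hmax /= e0 es !hm es !alenE e0 //.
Qed.

Lemma hd_aboxf_ext i o (J : ann R o o) h (f g : nat -> ann R i o) u v : hd J = [:: h] ->
  (u <= v)%N -> (forall k, (u <= k <= v)%N -> hd (f k) = hd (g k)) ->
  hd (aboxf J f u v) = hd (aboxf J g u v).
Proof.
move=> hJ huv hfg; rewrite /aboxf; apply: (hd_abox_ext hJ).
  by apply: hfg; rewrite leqnn.
rewrite -!map_comp; apply/eq_in_map => k; rewrite mem_iota => /andP[h1 h2] /=.
apply: hfg; apply/andP; split; lia.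
Qed.

Lemma hd_asumf_ext i o (f g : nat -> ann R i o) u v :
  (u <= v)%N -> (forall k, (u <= k <= v)%N -> hd (f k) = hd (g k)) ->
  hd (asumf f u v) = hd (asumf g u v).
Proof.
move=> huv hfg; rewrite !hd_asumf hfg ?leqnn //; congr hdpar.
apply/eq_in_map => k; rewrite mem_iota => /andP[h1 h2] /=.
apply: hfg; apply/andP; split; lia.
Qed.

Lemma alen_aboxf i o (J : ann R o o) h (f : nat -> ann R i o) u v : hd J = [:: h] ->
  (u <= v)%N -> alen (aboxf J f u v) = (\max_(u <= k < v.+1) alen (f k))%N.
Proof.
move=> hJ huv; rewrite /aboxf (alen_abox _ _ hJ) big_cons big_map.
rewrite (big_ltn (F := fun k => alen (f k))) ?ltnS //.
Qed.

Lemma mw_aboxf i o (J : ann R o o) h (f : nat -> ann R i o) u v : hd J = [:: h] ->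
  (u <= v)%N -> (mxl (hd (aboxf J f u v)) <= \sum_(u <= k < v.+1) maxn (mxl (hd (f k))) h)%N.
Proof.
move=> hJ huv; rewrite /aboxf; apply: leq_trans (mw_abox _ _ hJ) _.
rewrite big_cons big_map (big_ltn (F := fun k => maxn (mxl (hd (f k))) h)) ?ltnS //.
Qed.

Lemma alen_asumf_le i o (f : nat -> ann R i o) u v : (alen (asumf f u v) <= alen (f u))%N.
Proof. by rewrite !alenE hd_asumf ltnS size_hdpar_le. Qed.

Lemma mw_asumf i o (f : nat -> ann R i o) u v :
  (u <= v)%N -> (mxl (hd (asumf f u v)) <= \sum_(u <= k < v.+1) mxl (hd (f k)))%N.
Proof.
move=> huv; rewrite hd_asumf; apply: leq_trans (mxl_hdpar _ _) _.
rewrite big_cons big_map (big_ltn (F := fun k => mxl (hd (f k)))) ?ltnS //.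
Qed.

End Struct2.

End Helpers.
Import Helpers.
Unset Implicit Arguments.
Set Strict Implicit.

Theorem mainTheorem4 (R : realType) (d M dd : nat) (T : R) (a : R -> R)
  (J : ann R 1 1) (F : ann R 1 1) (G : ann R d 1)
  (cU : seq int -> R -> R) (W : seq int -> R -> 'cV[R]_d)
  (U : seq int -> nat -> R -> 'cV[R]_d -> R)
  (bU : seq int -> nat -> R -> ann R d 1) :
  (0 < d)%N -> (0 < M)%N -> (0 < dd)%N -> 0 < T -> continuous a ->
  ann_pos J -> ann_pos F -> ann_pos G ->
  dims J = [:: 1%N; dd; 1%N] ->
  (forall x, realization a J x = x) ->
  (forall th t, th != [::] -> 0 <= t <= T -> 0 <= cU th t <= T) ->
  (forall th n t x, th != [::] -> 0 <= t <= T ->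
     U th n t x =
       (0 < n)%N%:R / (M ^ n)%:R *
         \sum_(1 <= k < (M ^ n).+1) realn1 a G (x + W (th ++ [:: 0; - (k%:Z)]) (T - t))
       + \sum_(0 <= i < n)
           ((T - t) / (M ^ (n - i))%:R *
            \sum_(1 <= k < (M ^ (n - i)).+1)
              (real11 a F (U (th ++ [:: i%:Z; k%:Z]) i (cU (th ++ [:: i%:Z; k%:Z]) t)
                             (x + W (th ++ [:: i%:Z; k%:Z]) (cU (th ++ [:: i%:Z; k%:Z]) t - t)))
               - (0 < i)%N%:R *
                 real11 a F (U (th ++ [:: - (i%:Z); k%:Z]) (maxn i.-1 0)
                             (cU (th ++ [:: i%:Z; k%:Z]) t)
                             (x + W (th ++ [:: i%:Z; k%:Z]) (cU (th ++ [:: i%:Z; k%:Z]) t - t)))))) ->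
  (forall th t, th != [::] -> 0 <= t <= T -> bU th 0%N t = aff (0 : 'M[R]_(1, d)) 0) ->
  (forall th n t, th != [::] -> 0 <= t <= T -> (0 < n)%N ->
     bU th n t =
       abox J
         (asumf (fun k => ascale (1 / (M ^ n)%:R)
                   (acomp G (aff (1%:M : 'M[R]_d) (W (th ++ [:: 0; - (k%:Z)]) (T - t)))))
                1 (M ^ n))
         [:: aboxf J (fun i =>
                ascale ((T - t) / (M ^ (n - i))%:R)
                  (aboxf J (fun k =>
                     acomp (acomp F (bU (th ++ [:: i%:Z; k%:Z]) i (cU (th ++ [:: i%:Z; k%:Z]) t)))
                           (aff (1%:M : 'M[R]_d)
                                (W (th ++ [:: i%:Z; k%:Z]) (cU (th ++ [:: i%:Z; k%:Z]) t - t))))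
                     1 (M ^ (n - i))))
              0 n.-1;
             aboxf J (fun i =>
                ascale ((t - T) * (0 < i)%N%:R / (M ^ (n - i))%:R)
                  (aboxf J (fun k =>
                     acomp (acomp F (bU (th ++ [:: - (i%:Z); k%:Z]) (maxn i.-1 0)
                                        (cU (th ++ [:: i%:Z; k%:Z]) t)))
                           (aff (1%:M : 'M[R]_d)
                                (W (th ++ [:: i%:Z; k%:Z]) (cU (th ++ [:: i%:Z; k%:Z]) t - t))))
                     1 (M ^ (n - i))))
              0 n.-1]) ->
  forall th th1 th2 n t t1 t2 (x : 'cV[R]_d),
    th != [::] -> th1 != [::] -> th2 != [::] ->
    0 <= t <= T -> 0 <= t1 <= T -> 0 <= t2 <= T ->
    dims (bU th1 n t1) = dims (bU th2 n t2) /\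
    continuous (realization a (bU th n t)) /\
    (alen (bU th n t) <= maxn dd (alen G) + n * ahidden F)%N /\
    (maxdim (bU th n t) <= maxn dd (maxn (maxdim F) (maxdim G)) * (3 * M) ^ n)%N /\
    U th n t x = realn1 a (bU th n t) x /\
    (aparams (bU th n t) <=
           2 * (maxn dd (alen G) + n * ahidden F)
             * (maxn dd (maxn (maxdim F) (maxdim G))) ^ 2 * (3 * M) ^ (2 * n))%N.
Proof.
move=> d0 M0 dd0 T0 ac posJ posF posG dJ rJ hcU hU hbU0 hbU.
have hJ : hd J = [:: dd].
  move: dJ; rewrite dimsE; case: (hd J) => [|x [|y l]] //=; first by case=> ->.
  by case=> _ _; case: l.
have ne : forall th (x y : int), th ++ [:: x; y] != [::] by move=> th x y; case: th.
have Mp : forall k, (0 < M ^ k)%N by move=> k; rewrite expn_gt0 M0.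
have hdE : forall n th1 th2 t1 t2, th1 != [::] -> th2 != [::] -> 0 <= t1 <= T -> 0 <= t2 <= T ->
    hd (bU th1 n t1) = hd (bU th2 n t2).
  elim/ltn_ind => n IH th1 th2 t1 t2 n1 n2 ht1 ht2.
  case: n IH => [|n] IH; first by rewrite !hbU0.
  rewrite !hbU //.
  apply: (hd_abox_ext hJ).
    by apply: hd_asumf_ext => // k hk /=; rewrite !hd_ascale /= !hd_premerge.
  rewrite /=; congr [:: _; _].
    apply: (hd_aboxf_ext hJ) => // i hi /=; rewrite !hd_ascale.
    apply: (hd_aboxf_ext hJ) => // k hk /=; rewrite !hd_premerge !hd_acomp.
    by rewrite (IH i _ _ (th2 ++ [:: i%:Z; k%:Z]) _ (cU (th2 ++ [:: i%:Z; k%:Z]) t2)) ?ne //; apply: hcU.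
  apply: (hd_aboxf_ext hJ) => // i hi /=; rewrite !hd_ascale.
  apply: (hd_aboxf_ext hJ) => // k hk /=; rewrite !hd_premerge !hd_acomp.
  rewrite (IH _ _ _ (th2 ++ [:: - i%:Z; k%:Z]) _ (cU (th2 ++ [:: i%:Z; k%:Z]) t2)) ?ne //; first (by move: hi => /=; lia); apply: hcU => //.
have hF1 : (0 < alen F)%N by rewrite alenE.
have alB : forall n th t, th != [::] -> 0 <= t <= T ->
    (alen (bU th n t) <= maxn dd (alen G) + n * ahidden F)%N.
  elim/ltn_ind => n IH th t nth ht.
  case: n IH => [|n] IH; first by rewrite hbU0 //=; lia.
  rewrite hbU // (alen_abox _ _ hJ) !big_cons big_nil !geq_max leq0n !andbT.
  apply/and3P; split.
  - apply: leq_trans (alen_asumf_le _ _ _) _; rewrite alen_ascale alen_acomp /=; lia.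
  - rewrite (alen_aboxf _ hJ) //; apply/bigmax_leqP_seq => i; rewrite mem_index_iota => /andP[_ hi] _.
    rewrite alen_ascale (alen_aboxf _ hJ) ?Mp //; apply/bigmax_leqP_seq => k _ _.
    rewrite alen_acomp /= alen_acomp.
    have := IH i _ (th ++ [:: i%:Z; k%:Z]) (cU (th ++ [:: i%:Z; k%:Z]) t) (ne _ _ _) (hcU _ _ (ne _ _ _) ht).
    move: hi => /= hi; rewrite /ahidden; have := leq_mul (leqnn (alen F).-1) hi.
    nia.
  - rewrite (alen_aboxf _ hJ) //; apply/bigmax_leqP_seq => i; rewrite mem_index_iota => /andP[_ hi] _.
    rewrite alen_ascale (alen_aboxf _ hJ) ?Mp //; apply/bigmax_leqP_seq => k _ _.
    rewrite alen_acomp /= alen_acomp.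
    have hi' : (maxn i.-1 0 < n.+1)%N by move: hi => /=; lia.
    have := IH _ hi' (th ++ [:: - i%:Z; k%:Z]) (cU (th ++ [:: i%:Z; k%:Z]) t) (ne _ _ _) (hcU _ _ (ne _ _ _) ht).
    move: hi => /= hi; rewrite /ahidden; have := leq_mul (leqnn (alen F).-1) hi.
    have := leq_mul (leqnn (alen F).-1) (leq_maxl i.-1 0).
    nia.
set c := maxn dd (maxn (maxdim F) (maxdim G)).
have cdd : (dd <= c)%N by rewrite /c leq_maxl.
have cF : (mxl (hd F) <= c)%N.
  by rewrite /c maxdimE; lia.
have cG : (mxl (hd G) <= c)%N.
  by rewrite /c (maxdimE G); lia.
have M3 : (0 < 3 * M)%N by lia.
have cpos : forall i, (c <= c * (3 * M) ^ i)%N.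
  by move=> i; rewrite -{1}(muln1 c) leq_mul2l expn_gt0 M3 orbT.
have S3 : forall n, (1 + 2 * \sum_(0 <= i < n) 3 ^ i = 3 ^ n)%N.
  elim=> [|n IH]; first by rewrite big_nil.
  by rewrite big_nat_recr //= mulnDr addnA IH expnS; lia.
have tid : forall n i, (i <= n)%N -> (M ^ (n - i) * (c * (3 * M) ^ i) = c * M ^ n * 3 ^ i)%N.
  move=> n i hi; rewrite expnMn.
  rewrite -{2}(subnK hi) expnD; lia.
have bYZ : forall n th t (sgn : int -> int) (lev : nat -> nat) (coef : nat -> R),
    (0 < n)%N -> th != [::] -> 0 <= t <= T -> (forall i, (i < n)%N -> (lev i <= i)%N) ->
    (forall j, (j < n)%N -> forall th t, th != [::] -> 0 <= t <= T ->
        (mxl (hd (bU th j t)) <= c * (3 * M) ^ j)%N) ->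
    (maxn (mxl (hd (aboxf J (fun i => ascale (coef i) (aboxf J (fun k =>
        acomp (acomp F (bU (th ++ [:: sgn i%:Z; k%:Z]) (lev i) (cU (th ++ [:: i%:Z; k%:Z]) t)))
              (aff (1%:M : 'M[R]_d) (W (th ++ [:: i%:Z; k%:Z]) (cU (th ++ [:: i%:Z; k%:Z]) t - t)%R)))
        1 (M ^ (n - i)))) 0 n.-1))) dd <= c * M ^ n * \sum_(0 <= i < n) 3 ^ i)%N.
  move=> n th t sgn lev coef n0 nth ht hlev IH.
  have hS : (c * M ^ n * \sum_(0 <= i < n) 3 ^ i =
             \sum_(0 <= i < n) M ^ (n - i) * (c * (3 * M) ^ i))%N.
    rewrite big_distrr /=; rewrite big_nat_cond [RHS]big_nat_cond.
    by apply: eq_bigr => i /andP[/andP[_ hi] _]; rewrite tid // ltnW.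
  rewrite hS geq_max; apply/andP; split; last first.
    rewrite -(prednK n0) big_nat_recl //=; apply: leq_trans (leq_addr _ _).
    by rewrite subn0 expn0 muln1; apply: leq_trans cdd _; rewrite -{1}(mul1n c) leq_mul // Mp.
  apply: leq_trans (mw_aboxf _ hJ (leq0n _)) _.
  rewrite (prednK n0) big_nat_cond [X in (_ <= X)%N]big_nat_cond.
  apply: leq_sum => i /andP[/andP[_ hi] _]; rewrite hd_ascale geq_max; apply/andP; split; last first.
    apply: leq_trans cdd _; apply: leq_trans (cpos i) _; by rewrite leq_pmull ?Mp.
  apply: leq_trans (mw_aboxf _ hJ (Mp _)) _.
  have -> : (M ^ (n - i) * (c * (3 * M) ^ i) = \sum_(1 <= k < (M ^ (n - i)).+1) (c * (3 * M) ^ i))%N by rewrite sum_nat_const_nat subSS subn0.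
  apply: leq_sum => k _; rewrite geq_max; apply/andP; split; last first.
    by apply: leq_trans cdd (cpos i).
  rewrite hd_acomp /= hd_acomp mxl_cat geq_max; apply/andP; split.
    have hj : (lev i < n)%N by apply: leq_ltn_trans (hlev _ hi) hi.
    apply: leq_trans (IH (lev i) hj (th ++ [:: sgn i%:Z; k%:Z]) (cU (th ++ [:: i%:Z; k%:Z]) t) (ne _ _ _) (hcU _ _ (ne _ _ _) ht)) _.
    by apply: leq_mul => //; apply: leq_pexp2l => //; exact: hlev.
  by apply: leq_trans cF (cpos i).
have mwB : forall n th t, th != [::] -> 0 <= t <= T ->
    (mxl (hd (bU th n t)) <= c * (3 * M) ^ n)%N.
  elim/ltn_ind => n IH th t nth ht.
  case: n IH => [|n] IH; first by rewrite hbU0 //= mxl_nil.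
  rewrite hbU //; apply: leq_trans (mw_abox _ _ hJ) _; rewrite !big_cons big_nil addn0.
  have e : (c * (3 * M) ^ n.+1 = c * M ^ n.+1 + (c * M ^ n.+1 * \sum_(0 <= i < n.+1) 3 ^ i
             + c * M ^ n.+1 * \sum_(0 <= i < n.+1) 3 ^ i))%N.
    rewrite expnMn -(S3 n.+1); lia.
  rewrite e; apply: leq_add; [|apply: leq_add].
  - rewrite geq_max; apply/andP; split; last first.
      by apply: leq_trans cdd _; rewrite leq_pmulr ?Mp.
    apply: leq_trans (mw_asumf _ (Mp _)) _.
    under eq_bigr do rewrite hd_ascale hd_acomp /=.
    by rewrite sum_nat_const_nat subSS subn0 mulnC leq_mul2r cG orbT.
  - exact: (bYZ n.+1 th t (fun z => z) (fun i => i) (fun i => (T - t) / (M ^ (n.+1 - i))%:R)).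
  - apply: (bYZ n.+1 th t (fun z => - z) (fun i => maxn i.-1 0)
       (fun i => (t - T) * (0 < i)%N%:R / (M ^ (n.+1 - i))%:R)) => //.
    by move=> i _; lia.
have c1 : forall v : 'cV[R]_1, const_mx (v 0 0) = v.
  by move=> v; apply/matrixP => i j; rewrite !ord1 mxE.
have rE : forall n th t x, th != [::] -> 0 <= t <= T -> U th n t x = realn1 a (bU th n t) x.
  elim/ltn_ind => n IH th t x nth ht.
  case: n IH => [|n] IH.
    by rewrite hU // hbU0 // /realn1 /= !mul0r big_geq // add0r mul0mx add0r mxE.
  rewrite /realn1 hbU // (real_abox _ _ _ hJ rJ) !big_cons big_nil addr0 !mxE hU //.
  rewrite real_asumf; last exact: Mp; last first.
    by move=> k; rewrite !alenE !hd_ascale /= !hd_premerge.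
  rewrite !(real_aboxf _ _ hJ rJ) //= summxE.
  congr (_ + _).
    rewrite mulr_sumr; apply: eq_bigr => k _.
    by rewrite real_ascale mxE real_premerge mul1mx.
  rewrite !summxE -big_split; apply: eq_big_nat => i hi /=.
  rewrite !real_ascale !mxE !(real_aboxf _ _ hJ rJ) ?Mp // !summxE.
  rewrite !mulr_sumr -big_split; apply: eq_bigr => k _ /=.
  rewrite !real_premerge !mul1mx !real_acomp.
  have hi' : (i < n.+1)%N by case/andP: hi.
  have hj : (maxn i.-1 0 < n.+1)%N by move: hi' => /=; lia.
  rewrite (IH i hi' _ _ _ (ne _ _ _) (hcU _ _ (ne _ _ _) ht)).
  rewrite (IH _ hj _ _ _ (ne _ _ _) (hcU _ _ (ne _ _ _) ht)).
  rewrite /real11 /realn1 !c1.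
  ring.
move=> th th1 th2 n t t1 t2 x n0 n1 n2 ht ht1 ht2.
have hw := mwB n th t n0 ht.
have hl := alB n th t n0 ht.
have hdG := head_le_maxdim G.
have hdc : (d <= c)%N by apply: leq_trans hdG _; apply: leq_trans (leq_maxr (maxdim F) _) (leq_maxr dd _).
have c1p : (1 <= c)%N by apply: leq_trans dd0 cdd.
have hmd : (maxdim (bU th n t) <= c * (3 * M) ^ n)%N.
  by rewrite maxdimE !geq_max hw (leq_trans hdc (cpos n)) (leq_trans c1p (cpos n)).
have hd1 : (1 <= maxdim (bU th n t))%N.
  by apply: leq_trans (head_le_maxdim _).
split; first by rewrite !dimsE (hdE n th1 th2 t1 t2).
split; first exact: real_cont.
split; first exact: hl.
split; first exact: hmd.
split; first exact: rE.
apply: leq_trans (aparams_le _) _.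
move: hmd hd1 hl; set w := maxdim _; set L := alen _; set X := ((3 * M) ^ n)%N.
set Lb := (maxn dd _ + _)%N => hmd hd1 hl.
have h2 : (w * w.+1 <= 2 * (w * w))%N.
  by rewrite mulnCA leq_mul2l -addn1 mul2n -addnn leq_add2l hd1 orbT.
have h3 : (w * w <= (c * X) * (c * X))%N by apply: leq_mul.
have -> : (2 * Lb * c ^ 2 * (3 * M) ^ (2 * n) = Lb * (2 * ((c * X) * (c * X))))%N.
  rewrite (mulnC 2 n) expnM -/X !expnS expn0 !muln1.
  by move: (Lb) (c) (X) => p q r; ring.
apply: leq_mul => //.
apply: leq_trans h2 _; by rewrite leq_mul2l h3 orbT.
Qed.
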